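(* Let $h$ be a positive integer and $L$ an $h$-modular lattice with zero. Let $x\in\mathcal{A}'$ and let $n,k$ be nonnegative integers. If $k\geq n$, then $x^{(k+1)}(a_n)=x^{(k)}(a_n)$ and $x^{(k+1)}(b_n)=x^{(k)}(b_n)$.
   Context: $K$ is the lattice consisting of $\varnothing$, $C=\{c\}$, $A_m=\{a_k:k\geq m\}$, $B_n=\{b_k:k\geq n\}$ ($m,n<\omega$), and $C\cup A_m\cup B_n$ with $|m-n|\leq1$, ordered by inclusion; $a_n,b_n,c$ denote $A_n,B_n,C$, so $\mathrm{J}(K)=\{c\}\cup\{a_n\}\cup\{b_n\}$ with $a_0>a_1>\cdots$, $b_0>b_1>\cdots$ and no other comparabilities. $\mathcal{A}$ is the set of antitone maps $x\colon\mathrm{J}(K)\to L$ with finite range. For $x\in\mathcal{A}$, $x(a_\infty)$, $x(b_\infty)$ are the eventual values of the increasing sequences $(x(a_n))$, $(x(b_n))$. The map $x^{(1)}$ is defined by $x^{(1)}(c)=x(c)\vee(x(a_\infty)\wedge x(b_\infty))$, $x^{(1)}(a_0)=x(a_0)$, $x^{(1)}(b_0)=x(b_0)$, $x^{(1)}(a_{n+1})=x(a_{n+1})\vee(x(b_n)\wedge x(c))$, $x^{(1)}(b_{n+1})=x(b_{n+1})\vee(x(a_n)\wedge x(c))$; $\mathcal{A}$ is closed under $x\mapsto x^{(1)}$, and $x^{(0)}=x$, $x^{(k+1)}=(x^{(k)})^{(1)}$. Put $\ell(x)=\langle x(a_\infty),x(b_\infty),x(c)\rangle$ and $\mathcal{A}'=\{x\in\mathcal{A}:\ell(x^{(1)})=\ell(x)\}$.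 $L$ is $h$-modular if $u^{(h+1)}=u^{(h)}$ for all $u\in L^3$, where $\langle x,y,z\rangle^{(1)}=\langle x\vee(y\wedge z),y\vee(x\wedge z),z\vee(x\wedge y)\rangle$. *)

(* Defs.v *)
From mathcomp Require Import all_boot all_order.
From Stdlib Require Import ClassicalEpsilon.
Set Implicit Arguments. Unset Strict Implicit. Unset Printing Implicit Defensive.
Import Order.TTheory.
Local Open Scope order_scope.

(* The join-irreducibles J(K) = {c} ∪ {a_n} ∪ {b_n}. *)
Inductive JK : Type := Jc | Ja of nat | Jb of nat.

Definition jge (p q : JK) : Prop :=
  match p, q with
  | Jc, Jc => True
  | Ja n, Ja m => (n <= m)%N
  | Jb n, Jb m => (n <= m)%N
  | _, _ => False
  end.

Section Defs.
Context {disp : Order.disp_t} {L : bLatticeType disp}.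

Definition antitone (x : JK -> L) : Prop :=
  forall p q, jge p q -> x p <= x q.

Definition finite_range (x : JK -> L) : Prop :=
  exists s : seq L, forall p, x p \in s.

Definition inA (x : JK -> L) : Prop := antitone x /\ finite_range x.

(* eventual value of a sequence (chosen by epsilon; for x in A it is the
   eventual value of the increasing sequence with finite range) *)
Definition eventual (f : nat -> L) : L :=
  epsilon (inhabits \bot) (fun v => exists N, forall n, (N <= n)%N -> f n = v).

Definition x_ainf (x : JK -> L) : L := eventual (fun n => x (Ja n)).
Definition x_binf (x : JK -> L) : L := eventual (fun n => x (Jb n)).

Definition step (x : JK -> L) : JK -> L :=
  fun p => match p with
  | Jc => x Jc `|` (x_ainf x `&` x_binf x)
  | Ja 0 => x (Ja 0)
  | Jb 0 => x (Jb 0)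
  | Ja n.+1 => x (Ja n.+1) `|` (x (Jb n) `&` x Jc)
  | Jb n.+1 => x (Jb n.+1) `|` (x (Ja n) `&` x Jc)
  end.

Definition stepk (k : nat) (x : JK -> L) : JK -> L := iter k step x.

Definition ell (x : JK -> L) : L * L * L := (x_ainf x, x_binf x, x Jc).

Definition inA' (x : JK -> L) : Prop := inA x /\ ell (step x) = ell x.

Definition tri_step (u : L * L * L) : L * L * L :=
  let: (x, y, z) := u in
  (x `|` (y `&` z), y `|` (x `&` z), z `|` (x `&` y)).

End Defs.

Definition hmodular (h : nat) {disp : Order.disp_t} (L : bLatticeType disp) : Prop :=
  forall u : L * L * L, iter h.+1 tri_step u = iter h tri_step u.

(* Main.v *)
Require Import Defs.
From mathcomp Require Import all_boot all_order.
From Stdlib Require Import Classical ClassicalEpsilon.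
From mathcomp Require Import zify.
Import Order.TTheory.

Section Aux.
Context {disp : Order.disp_t} {L : bLatticeType disp}.
Local Open Scope order_scope.

Lemma eventual_eq (f : nat -> L) v N :
  (forall n, (N <= n)%N -> f n = v) -> eventual f = v.
Proof.
move=> H; rewrite /eventual.
have ex : exists v, exists N, forall n, (N <= n)%N -> f n = v by exists v, N.
have [N' HN'] := epsilon_spec (inhabits \bot) _ ex.
by rewrite -(HN' (maxn N N')) ?leq_maxr // (H (maxn N N')) ?leq_maxl.
Qed.

Lemma count_lt (P Q : pred L) (s : seq L) :
  subpred P Q -> (exists2 y, y \in s & Q y && ~~ P y) ->
  (count P s < count Q s)%N.
Proof.
move=> sPQ; elim: s => [|a s IH] [y]; first by [].
rewrite inE => /orP [/eqP -> | ys] Hy /=.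
  case/andP: Hy => -> /negbTE ->; rewrite add1n add0n ltnS.
  exact: sub_count.
have := IH (ex_intro2 _ _ y ys Hy).
case Pa: (P a); first by rewrite (sPQ _ Pa).
by case: (Q a) => /=; lia.
Qed.

Lemma stab (f : nat -> L) (s : seq L) :
  (forall n m, (n <= m)%N -> f n <= f m) -> (forall n, f n \in s) ->
  exists N, forall n, (N <= n)%N -> f n = f N.
Proof.
move=> mono ins.
pose g n := count (fun y => y <= f n) s.
have gle n : (g n <= size s)%N by exact: count_size.
have glt n m : (n <= m)%N -> f n != f m -> (g n < g m)%N.
  move=> nm neq; apply: count_lt.
    by move=> y /= H; apply: le_trans H (mono _ _ nm).
  exists (f m) => //; rewrite lexx /=.
  apply/negP => H; move/negP: neq; apply; apply/eqP/le_anti.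
  by rewrite H mono.
suff: forall d N, (size s - g N <= d)%N -> exists M, forall n, (M <= n)%N -> f n = f M.
  by move=> /(_ (size s) 0%N); apply; lia.
elim=> [|d IH] N HN.
  case: (classic (forall n, (N <= n)%N -> f n = f N)) => [H|]; first by exists N.
  move=> /not_all_ex_not [n] Hn.
  have [Nn fn] := imply_to_and _ _ Hn.
  have {}fn : f n != f N by apply/eqP.
  have := glt _ _ Nn; rewrite eq_sym => /(_ fn); have := gle n; lia.
case: (classic (forall n, (N <= n)%N -> f n = f N)) => [H|]; first by exists N.
move=> /not_all_ex_not [n] Hn.
  have [Nn fn] := imply_to_and _ _ Hn.
  have {}fn : f n != f N by apply/eqP.
apply: (IH n).
have := glt _ _ Nn; rewrite eq_sym => /(_ fn); lia.
Qed.

Lemma inA_stab (x : JK -> L) : inA x ->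
  exists N, forall n, (N <= n)%N -> x (Ja n) = x_ainf x /\ x (Jb n) = x_binf x.
Proof.
case=> anti [s ins].
have [Na HNa] := stab (fun n => x (Ja n)) s
   (fun n m nm => anti (Ja n) (Ja m) nm) (fun n => ins _).
have [Nb HNb] := stab (fun n => x (Jb n)) s
   (fun n m nm => anti (Jb n) (Jb m) nm) (fun n => ins _).
have ea : x_ainf x = x (Ja Na) := eventual_eq _ _ _ HNa.
have eb : x_binf x = x (Jb Nb) := eventual_eq _ _ _ HNb.
exists (maxn Na Nb) => n Hn; rewrite ea eb HNa ?HNb //; lia.
Qed.

Lemma step_ge (x : JK -> L) p : x p <= step x p.
Proof. by case: p => [|[|n]|[|n]] //=; rewrite leUl. Qed.

Lemma step_inA (x : JK -> L) : inA x -> inA (step x).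
Proof.
case=> anti [s ins]; split.
  case=> [|n|n] [|m|m] //= H.
  - case: n H => [|n] H; first by apply: le_trans (step_ge x (Ja m)); exact: anti.
    case: m H => [|m] H //=; apply: leU2; first exact: anti.
    by apply: leI2 => //; apply: anti.
  - case: n H => [|n] H; first by apply: le_trans (step_ge x (Jb m)); exact: anti.
    case: m H => [|m] H //=; apply: leU2; first exact: anti.
    by apply: leI2 => //; apply: anti.
exists (s ++ [seq y `|` (z `&` x Jc) | y <- s, z <- s] ++ [:: step x Jc]).
case=> [|[|n]|[|n]] /=; rewrite !mem_cat ?ins ?mem_seq1 ?eqxx ?orbT //;
  by rewrite (allpairs_f (fun y z => y `|` (z `&` x Jc))) ?orbT.
Qed.

Lemma step_ell (x : JK -> L) : inA x -> ell (step x) = tri_step (ell x).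
Proof.
move=> xA; have [N HN] := inA_stab x xA.
rewrite /ell /tri_step /=.
have -> : x_ainf (step x) = x_ainf x `|` (x_binf x `&` x Jc).
  apply: (eventual_eq _ _ N.+1) => [[|n]] // Hn /=.
  by rewrite (proj1 (HN n.+1 _)) ?(proj2 (HN n _)) //; lia.
have -> : x_binf (step x) = x_binf x `|` (x_ainf x `&` x Jc).
  apply: (eventual_eq _ _ N.+1) => [[|n]] // Hn /=.
  by rewrite (proj2 (HN n.+1 _)) ?(proj1 (HN n _)) //; lia.
by [].
Qed.

Lemma step_inA' (x : JK -> L) : inA' x -> inA' (step x).
Proof.
case=> xA e; split; first exact: step_inA.
rewrite (step_ell (step x)); last exact: step_inA.
by rewrite e -(step_ell x xA) e.
Qed.

Lemma stepk_inA' (x : JK -> L) k : inA' x -> inA' (stepk k x).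
Proof. by move=> xA; elim: k => [|k IH] //=; apply: step_inA'. Qed.

Lemma stepk_c (x : JK -> L) k : inA' x -> stepk k.+1 x Jc = stepk k x Jc.
Proof.
move=> /(stepk_inA' x k) [_ e].
by have := congr1 (fun t => t.2) e.
Qed.

End Aux.

Theorem lemma5p5 (disp : Order.disp_t) (L : bLatticeType disp) (h : nat) :
  (0 < h)%N -> hmodular h L ->
  forall x : JK -> L, inA' x ->
  forall n k : nat, (n <= k)%N ->
    stepk k.+1 x (Ja n) = stepk k x (Ja n) /\
    stepk k.+1 x (Jb n) = stepk k x (Jb n).
Proof.
move=> _ _ x xA n; elim: n => [|n IH] k Hk; first by [].
case: k Hk => [|j] // Hj.
have [IHa IHb] := IH j Hj.
have ec := stepk_c x j xA.
split.
  change ((stepk j.+1 x (Ja n.+1) `|` (stepk j.+1 x (Jb n) `&` stepk j.+1 x Jc))%O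
    = stepk j.+1 x (Ja n.+1)).
  rewrite IHb ec.
  change (stepk j.+1 x (Ja n.+1)) with
    ((stepk j x (Ja n.+1) `|` (stepk j x (Jb n) `&` stepk j x Jc))%O).
  by apply/Order.POrderTheory.le_anti; rewrite leUl andbT leUx lexx /= leUr.
change ((stepk j.+1 x (Jb n.+1) `|` (stepk j.+1 x (Ja n) `&` stepk j.+1 x Jc))%O
  = stepk j.+1 x (Jb n.+1)).
rewrite IHa ec.
change (stepk j.+1 x (Jb n.+1)) with
  ((stepk j x (Jb n.+1) `|` (stepk j x (Ja n) `&` stepk j x Jc))%O).
by apply/Order.POrderTheory.le_anti; rewrite leUl andbT leUx lexx /= leUr.
Qed.
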